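(* For all $n\geq 0$, $$m_n=\sum_{k=0}^{n}\binom{n}{k}d_k,$$ where $d_k$ is the number of symmetric Dyck paths of length $2k$ and $m_n$ is the number of symmetric Motzkin paths of length $2n$.
   Context: Steps: $U=(1,1)$, $D=(1,-1)$, $h=(1,0)$. A Dyck path of length $2n$ is a lattice path from $(0,0)$ to $(2n,0)$ using steps $U,D$ that never goes below the $x$-axis; a Motzkin path of length $2n$ is the same but steps $U,D,h$ are allowed. Such a path with step sequence $s_1s_2\cdots s_{2n}$ is symmetric if for every $i$, $s_{2n+1-i}$ is the mirror of $s_i$, where the mirror of $U$ is $D$, of $D$ is $U$, and of $h$ is $h$ (i.e. the path is invariant under reflection in the line $x=n$). $d_n$ denotes the number of symmetric Dyck paths of length $2n$ (so $d_n=\binom{n}{\lfloor n/2\rfloor}$) and $m_n$ the number of symmetric Motzkin paths of length $2n$. *)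

(* Defs.v *)
From HB Require Import structures.
From mathcomp Require Import all_boot.
Set Implicit Arguments. Unset Strict Implicit. Unset Printing Implicit Defensive.

(* Steps U=(1,1), D=(1,-1), h=(1,0). *)
Inductive step := U | D | H.

Definition step_to_nat (s : step) : nat := match s with U => 0 | D => 1 | H => 2 end.
Definition nat_to_step (n : nat) : option step :=
  match n with 0 => Some U | 1 => Some D | 2 => Some H | _ => None end.
Lemma step_pcancel : pcancel step_to_nat nat_to_step. Proof. by case. Qed.
HB.instance Definition _ := Countable.copy step (pcan_type step_pcancel).
Definition step_enum := [:: U; D; H].
Lemma step_enumP : Finite.axiom step_enum. Proof. by case. Qed.
HB.instance Definition _ := isFinite.Build step step_enumP.

(* Heights are compared via step counts (avoiding signed integers):
   the height after the first i steps is  #U(prefix) - #D(prefix). *)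
Definition nU (p : seq step) (i : nat) : nat := count (pred1 U) (take i p).
Definition nD (p : seq step) (i : nat) : nat := count (pred1 D) (take i p).

Definition is_path (p : seq step) : bool :=
  [forall i : 'I_(size p).+1, nD p i <= nU p i] && (nU p (size p) == nD p (size p)).

Definition is_dyck (p : seq step) : bool := is_path p && (H \notin p).
Definition is_motzkin (p : seq step) : bool := is_path p.

Definition mirror (s : step) : step := match s with U => D | D => U | H => H end.

Definition sym_path (p : seq step) : bool :=
  [forall i : 'I_(size p), nth H p (size p - 1 - i) == mirror (nth H p i)].

Definition d (n : nat) : nat :=
  #|[set p : (2 * n).-tuple step | is_dyck p && sym_path p]|.
Definition m (n : nat) : nat :=
  #|[set p : (2 * n).-tuple step | is_motzkin p && sym_path p]|.

(* Main.v *)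
Require Import Defs.
From mathcomp Require Import all_boot.
From mathcomp Require Import zify.

Fixpoint mea h p := match p with
  | [::] => true
  | s :: p' => match s with U => mea h.+1 p' | D => (0 < h) && mea h.-1 p' | H => mea h p' end end.
Fixpoint endh h p := match p with
  | [::] => h
  | s :: p' => match s with U => endh h.+1 p' | D => endh h.-1 p' | H => endh h p' end end.
Fixpoint pathh h p := match p with
  | [::] => h == 0
  | s :: p' => match s with U => pathh h.+1 p' | D => (0 < h) && pathh h.-1 p' | H => pathh h p' end end.

Lemma mea_cat q r h : mea h (q ++ r) = mea h q && mea (endh h q) r.
Proof. by elim: q h => [|[] q IH] h //=; rewrite IH ?andbA. Qed.
Lemma endh_cat q r h : endh h (q ++ r) = endh (endh h q) r.
Proof. by elim: q h => [|[] q IH] h //=. Qed.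
Lemma pathh_cat q r h : pathh h (q ++ r) = mea h q && pathh (endh h q) r.
Proof. by elim: q h => [|[] q IH] h //=; rewrite IH ?andbA. Qed.

Lemma pathh_rev q h : pathh h (rev (map mirror q)) = mea 0 q && (endh 0 q == h).
Proof.
elim/last_ind: q h => [|q s IH] h; first by rewrite /= eq_sym.
rewrite map_rcons rev_rcons -cats1 mea_cat endh_cat.
case: s => /=; rewrite IH ?andbT.
- by case: h => [|h]; rewrite /= ?eqSS ?andbF.
- by case: (endh 0 q) => [|e]; rewrite /= ?eqSS ?andbF ?andbT.
- by [].
Qed.

Definition F (q : seq step) := q ++ rev (map mirror q).

Lemma pathh_F q : pathh 0 (F q) = mea 0 q.
Proof. by rewrite /F pathh_cat pathh_rev eqxx andbT andbb. Qed.

Lemma nU_cons0 s p : nU (s :: p) 0 = 0. Proof. by []. Qed.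
Lemma nD_cons0 s p : nD (s :: p) 0 = 0. Proof. by []. Qed.
Lemma nU_consS s p i : nU (s :: p) i.+1 = (s == U) + nU p i. Proof. by []. Qed.
Lemma nD_consS s p i : nD (s :: p) i.+1 = (s == D) + nD p i. Proof. by []. Qed.
Lemma nU_nil i : nU [::] i = 0. Proof. by case: i. Qed.
Lemma nD_nil i : nD [::] i = 0. Proof. by case: i. Qed.

Lemma pathhP h p : pathh h p <->
  ((forall i, nD p i <= h + nU p i) /\ h + nU p (size p) = nD p (size p)).
Proof.
elim: p h => [|s p IH] h.
  rewrite /=; split.
    by move/eqP=> ->; split => [i|]; rewrite ?nU_nil ?nD_nil.
  by move=> [_]; rewrite ?nU_nil ?nD_nil => /eqP; rewrite addn0.
have HS : forall i, (nD (s :: p) i <= h + nU (s :: p) i) =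
   if i is j.+1 then (s == D) + nD p j <= h + ((s == U) + nU p j) else true.
  by case=> [|j]; rewrite ?nU_cons0 ?nD_cons0 ?nU_consS ?nD_consS // leq0n.
rewrite /= nU_consS nD_consS.
case: s HS => /= HS.
- rewrite IH; split.
    move=> [H1 H2]; split; last by lia.
    by move=> [|i]; rewrite HS //; have := H1 i; lia.
  move=> [H1 H2]; split; last by lia.
  by move=> i; have := H1 i.+1; rewrite HS; lia.
- split.
    move/andP=> [hp /IH [H1 H2]]; split; last by lia.
    by move=> [|i]; rewrite HS //; have := H1 i; lia.
  move=> [H1 H2].
  have hp : 0 < h by have := H1 1; rewrite HS /= /nD /nU take0 /=; lia.
  apply/andP; split => //; apply/IH; split; last by lia.
  by move=> i; have := H1 i.+1; rewrite HS; lia.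
- rewrite IH; split.
    move=> [H1 H2]; split; last by lia.
    by move=> [|i]; rewrite HS //; have := H1 i; lia.
  move=> [H1 H2]; split; last by lia.
  by move=> i; have := H1 i.+1; rewrite HS; lia.
Qed.

Lemma is_pathE p : is_path p = pathh 0 p.
Proof.
apply/idP/idP.
  move/andP=> [/forallP H1 /eqP H2]; apply/pathhP; split => //.
  move=> i; case: (leqP i (size p)) => hi.
    by have := H1 (Ordinal (hi : i < (size p).+1)).
  have := H1 ord_max; rewrite /nD /nU /= !take_oversize // ?(ltnW hi) //.
move/pathhP=> [H1 H2]; apply/andP; split.
  by apply/forallP=> i; exact: H1.
by apply/eqP.
Qed.

Lemma mirrorK : involutive mirror. Proof. by case. Qed.
Lemma mmK s : map mirror (map mirror s) = s.
Proof. by elim: s => //= x s ->; rewrite mirrorK. Qed.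

Lemma symE p : sym_path p = (rev p == map mirror p).
Proof.
apply/forallP/eqP.
  move=> Hs; apply: (eq_from_nth (x0:=H)); first by rewrite size_rev size_map.
  move=> i; rewrite size_rev => hi; rewrite nth_rev // (nth_map H) //.
  have := Hs (Ordinal hi) => /eqP /= <-.
  by have -> : size p - i.+1 = size p - 1 - i by lia.
move=> E i; have hi := ltn_ord i.
have := congr1 (fun s => nth H s i) E; rewrite /= nth_rev // (nth_map H) // => <-.
by have -> : size p - 1 - i = size p - i.+1 by lia.
Qed.

Lemma symF p n : size p = 2 * n -> sym_path p = (p == F (take n p)).
Proof.
move=> sp; rewrite symE; apply/eqP/eqP.
  move=> E.
  have E2 : p = rev (map mirror p).
    by rewrite -map_rev E mmK.
  rewrite /F -{1}(cat_take_drop n p); congr (_ ++ _).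
  by rewrite {1}E2 drop_rev size_map sp map_take; congr (rev (take _ _)); lia.
move=> ->; by rewrite /F rev_cat revK map_cat map_rev mmK.
Qed.

Lemma memHF q : (H \in F q) = (H \in q).
Proof.
rewrite /F mem_cat mem_rev; case: (boolP (H \in q)) => // hq /=.
apply/mapP => [[x xq]]; case: x xq => //= xq _; by rewrite xq in hq.
Qed.

Lemma size_F q : size (F q) = 2 * size q.
Proof. by rewrite /F size_cat size_rev size_map; lia. Qed.

Lemma take_F q : take (size q) (F q) = q.
Proof. by rewrite /F take_size_cat. Qed.

Lemma take_F' q k : size q = k -> take k (F q) = q.
Proof. by move=> <-; exact: take_F. Qed.

Lemma card_sym n (Q : pred (seq step)) :
  #|[set p : (2 * n).-tuple step | (val p == F (take n p)) && Q (take n p)]|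
  = #|[set q : n.-tuple step | Q q]|.
Proof.
have sF : forall q : n.-tuple step, size (F q) == 2 * n.
  by move=> q; rewrite size_F size_tuple.
pose G (q : n.-tuple step) : (2 * n).-tuple step := Tuple (sF q).
have Ginj : injective G.
  move=> q1 q2 /(congr1 val) /= E; apply: val_inj.
  by have := congr1 (take n) E; rewrite !take_F' ?size_tuple.
rewrite -(card_imset _ Ginj); apply: eq_card => p; rewrite inE.
apply/idP/imsetP.
  move/andP=> [/eqP E Hq].
  have st : size (take n p) == n by rewrite size_takel // size_tuple; lia.
  exists (Tuple st); first by rewrite inE.
  by apply: val_inj; rewrite /= {1}E.
move=> [q Hq ->]; rewrite inE in Hq.
by rewrite /= take_F' ?size_tuple // eqxx.
Qed.

Fixpoint allseqs n : seq (seq step) :=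
  if n is n'.+1 then
    [seq U :: x | x <- allseqs n'] ++ [seq D :: x | x <- allseqs n'] ++ [seq H :: x | x <- allseqs n']
  else [:: [::]].

Lemma allseqs_mem n s : (s \in allseqs n) = (size s == n).
Proof.
elim: n s => [|n IH] s; first by case: s.
have cinj : forall a : step, injective (cons a) by move=> a x y [].
have nm : forall a (A : seq (seq step)) t, (t \in [seq a :: x | x <- A]) -> t = a :: behead t.
  by move=> a A t /mapP [y _ ->].
case: s => [|x s].
  by rewrite /= !mem_cat; apply/negbTE/negP => /orP[|/orP[]] /nm.
rewrite /= eqSS -IH !mem_cat.
case: x; rewrite !(mem_map (cinj _));
  case: (s \in allseqs n); rewrite /= ?orbT ?orbF //; apply/negP;
  by do ?case/orP; move/nm.
Qed.

Lemma allseqs_uniq n : uniq (allseqs n).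
Proof.
have cinj : forall a : step, injective (cons a) by move=> a x y [].
have nm : forall a (A : seq (seq step)) t, (t \in [seq a :: x | x <- A]) -> t = a :: behead t.
  by move=> a A t /mapP [y _ ->].
elim: n => [|n IH] //=.
rewrite !cat_uniq !(map_inj_uniq (cinj _)) IH /= andbT.
apply/andP; split; apply/hasP => [[t]]; rewrite ?mem_cat.
  by case/orP => /nm -> /nm.
by move=> /nm -> /nm.
Qed.

Lemma card_count n (Q : pred (seq step)) :
  #|[set q : n.-tuple step | Q q]| = count Q (allseqs n).
Proof.
rewrite cardsE cardE -deprecated_filter_index_enum size_filter.
rewrite -(count_map val Q); apply/permP: Q; apply: uniq_perm.
- by rewrite (map_inj_uniq val_inj) index_enum_uniq.
- exact: allseqs_uniq.
move=> s; rewrite allseqs_mem; apply/mapP/idP.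
  by move=> [t _ ->]; rewrite size_tuple.
by move=> st; exists (Tuple st); rewrite ?mem_index_enum.
Qed.

Definition fm n h := count (mea h) (allseqs n).
Definition gd n h := count (fun q => mea h q && (H \notin q)) (allseqs n).

Lemma fmS n h : fm n.+1 h = fm n h.+1 + (if h is h'.+1 then fm n h' else 0) + fm n h.
Proof.
rewrite /fm /= !count_cat !count_map; rewrite addnA; congr (_ + _ + _).
by case: h => [|h]; [rewrite (@eq_count _ _ pred0) ?count_pred0 | apply: eq_count].
Qed.

Lemma gdS n h : gd n.+1 h = gd n h.+1 + (if h is h'.+1 then gd n h' else 0).
Proof.
rewrite /gd /= !count_cat !count_map.
rewrite (@eq_count _ (preim (cons H) _) pred0); last first.
  by move=> q /=; rewrite andbF.
rewrite count_pred0 addn0; congr (_ + _).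
by case: h => [|h]; [rewrite (@eq_count _ _ pred0) ?count_pred0 | apply: eq_count].
Qed.

Lemma fm_sum n h : fm n h = \sum_(k < n.+1) 'C(n, k) * gd k h.
Proof.
elim: n h => [|n IH] h.
  by rewrite big_ord_recl big_ord0 /fm /gd.
rewrite fmS.
have key : \sum_(k < n.+2) 'C(n.+1, k) * gd k h =
   \sum_(i < n.+1) 'C(n, i) * gd i.+1 h + \sum_(k < n.+1) 'C(n, k) * gd k h.
  rewrite big_ord_recl bin0 mul1n.
  under eq_bigr => i _ do rewrite lift0 binS mulnDl.
  rewrite big_split /= addnA addnC; congr (_ + _).
  rewrite [RHS]big_ord_recl bin0 mul1n big_ord_recr /= bin_small // mul0n addn0.
  by congr (_ + _); apply: eq_bigr => i _; rewrite lift0.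
rewrite key !IH; clear key; case: h => [|h] /=.
  rewrite !addn0; congr (_ + _); apply: eq_bigr => i _; by rewrite gdS addn0.
congr (_ + _); rewrite IH -big_split; apply: eq_bigr => i _; by rewrite gdS mulnDr.
Qed.

Lemma key_m n p : size p = 2 * n ->
  (is_motzkin p && sym_path p) = (p == F (take n p)) && mea 0 (take n p).
Proof.
move=> sp; rewrite (@symF p n sp) andbC /is_motzkin; case: eqP => //= E.
by rewrite is_pathE E pathh_F take_F' // size_takel // sp; lia.
Qed.

Lemma key_d n p : size p = 2 * n ->
  (is_dyck p && sym_path p) =
  (p == F (take n p)) && (mea 0 (take n p) && (H \notin take n p)).
Proof.
move=> sp; rewrite (@symF p n sp) andbC /is_dyck; case: eqP => //= E.
have st : size (take n p) = n by rewrite size_takel // sp; lia.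
by rewrite is_pathE E pathh_F memHF take_F'.
Qed.

Theorem theorem3p1 (n : nat) : m n = \sum_(0 <= k < n.+1) 'C(n, k) * d k.
Proof.
rewrite big_mkord.
have -> : m n = fm n 0.
  rewrite /m (eq_card (B := [set p : (2 * n).-tuple step |
         (val p == F (take n p)) && mea 0 (take n p)])); last first.
    by move=> p; rewrite !inE (@key_m n) // size_tuple.
  by rewrite card_sym card_count.
rewrite fm_sum; apply: eq_bigr => k _; congr (_ * _).
rewrite /d (eq_card (B := [set p : (2 * k).-tuple step |
       (val p == F (take k p)) && (mea 0 (take k p) && (H \notin take k p))])); last first.
  by move=> p; rewrite !inE (@key_d k) // size_tuple.
by rewrite (card_sym k (fun q => mea 0 q && (H \notin q))) (card_count k (fun q => mea 0 q && (H \notin q))).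
Qed.
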